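(* Let $\Gamma$ be a connected finite simple graph on $N\ge3$ vertices with minimum degree $d\ge3$ and $\varepsilon>\frac{\sqrt{d-1}}{d}$. If $u\ne v$ are vertices with $\mathcal N(u)\cap\mathcal N(v)\ne\emptyset$, then $$\big|\{w\in\mathcal N(u)\triangle\mathcal N(v):\deg w\in\{d,d+1\}\}\big|\ge 2d-1.$$
   Context: For a finite simple graph $\Gamma=(V,E)$ without isolated vertices, $\deg v$ is the number of neighbours of $v$ and $\mathcal N(v)=\{w\in V: w\sim v\}$; $\triangle$ denotes symmetric difference of sets. The normalized Laplacian acts on functions $f:V\to\mathbb R$ by $\Delta f(v)=f(v)-\frac{1}{\deg v}\sum_{w\sim v}f(w)$; its eigenvalues are $0=\lambda_1\le\lambda_2\le\dots\le\lambda_N$, and $\varepsilon:=\min_i|1-\lambda_i|$. $d$ denotes the minimum vertex degree. *)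

(* Defs.v *)
From HB Require Import structures.
From mathcomp Require Import all_boot all_order all_algebra.
From mathcomp Require Import reals.
Set Implicit Arguments. Unset Strict Implicit. Unset Printing Implicit Defensive.
Import Order.TTheory GRing.Theory Num.Theory.
Local Open Scope ring_scope.

Definition simple_graph n (e : rel 'I_n) : Prop :=
  symmetric e /\ irreflexive e.

Definition connected_graph n (e : rel 'I_n) : Prop :=
  forall x y, connect e x y.

Definition nbhd n (e : rel 'I_n) (v : 'I_n) : {set 'I_n} := [set w | e v w].
Definition deg n (e : rel 'I_n) (v : 'I_n) : nat := #|nbhd e v|.

(* minimum vertex degree (n is an upper bound for all degrees, so it is a
   neutral default for the minimum over the nonempty vertex set) *)
Definition mindeg n (e : rel 'I_n) : nat := \big[minn/n]_(v < n) deg e v.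

Definition symdiff (T : finType) (A B : {set T}) : {set T} := (A :\: B) :|: (B :\: A).

Definition nlaplacian (R : realType) n (e : rel 'I_n) : 'M[R]_n :=
  \matrix_(v, w) ((v == w)%:R - (e v w)%:R / (deg e v)%:R).

Definition nlap_eigenvalue (R : realType) n (e : rel 'I_n) (lam : R) : Prop :=
  exists2 f : 'cV[R]_n, f != 0 & nlaplacian R e *m f = lam *: f.
Arguments nlaplacian R {n} e.
Arguments nlap_eigenvalue R {n} e lam.

(* Main.v *)
Require Import Defs.
From HB Require Import structures.
From mathcomp Require Import all_boot all_order all_algebra.
From mathcomp Require Import reals.
From mathcomp Require Import ring lra zify.
Import Order.TTheory GRing.Theory Num.Theory.
Local Open Scope ring_scope.

Module SpecM.
From mathcomp Require Import classical_sets boolp topology normedtype derive.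
Import numFieldNormedType.Exports.
Set Implicit Arguments. Unset Strict Implicit.
Local Open Scope ring_scope.

Definition ipw (R : realType) n (w : 'I_n -> R) (x y : 'cV[R]_n) : R :=
  \sum_i w i * x i 0 * y i 0.
Arguments ipw {R n}.

Lemma ipwDl (R : realType) n (w : 'I_n -> R) x y z :
  ipw w (x + y) z = ipw w x z + ipw w y z.
Proof. rewrite /ipw -big_split /=; apply: eq_bigr => i _; rewrite !mxE; ring. Qed.

Lemma ipwZl (R : realType) n (w : 'I_n -> R) a x z :
  ipw w (a *: x) z = a * ipw w x z.
Proof. rewrite /ipw mulr_sumr; apply: eq_bigr => i _; rewrite !mxE; ring. Qed.

Lemma ipwC (R : realType) n (w : 'I_n -> R) x y : ipw w x y = ipw w y x.
Proof. rewrite /ipw; apply: eq_bigr => i _; ring. Qed.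

Lemma ipwDr (R : realType) n (w : 'I_n -> R) x y z :
  ipw w z (x + y) = ipw w z x + ipw w z y.
Proof. by rewrite ipwC ipwDl ![ipw _ _ z]ipwC. Qed.

Lemma ipwZr (R : realType) n (w : 'I_n -> R) a x z :
  ipw w z (a *: x) = a * ipw w z x.
Proof. by rewrite ipwC ipwZl ipwC. Qed.

Lemma ipw_ge0 (R : realType) n (w : 'I_n -> R) x :
  (forall i, 0 <= w i) -> 0 <= ipw w x x.
Proof.
move=> w0; apply: sumr_ge0 => i _; rewrite -mulrA; apply: mulr_ge0 => //.
by rewrite -expr2 sqr_ge0.
Qed.

Lemma ipw_eq0 (R : realType) n (w : 'I_n -> R) x :
  (forall i, 0 < w i) -> ipw w x x = 0 -> x = 0.
Proof.
move=> w0 /eqP; rewrite psumr_eq0 => [/allP H|i _]; last first.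
  by rewrite -mulrA; apply: mulr_ge0; [exact: ltW|rewrite -expr2 sqr_ge0].
apply/matrixP => i j; rewrite ord1 mxE.
have := H i (mem_index_enum _); rewrite implyTb -mulrA mulf_eq0 (gt_eqF (w0 i)) /=.
by rewrite mulf_eq0 orbb => /eqP.
Qed.

Lemma cont_sum (R : realType) n (I : Type) (s : seq I) (F : I -> 'rV[R]_n -> R) :
  (forall i, continuous (F i)) -> continuous (fun y => \sum_(i <- s) F i y).
Proof.
move=> Fc; elim: s => [|a s IH].
  under eq_fun do rewrite big_nil; exact: cst_continuous.
under eq_fun do rewrite big_cons.
by move=> y; apply: continuousD; [exact: Fc|exact: IH].
Qed.

Lemma cont_coord (R : realType) n (i : 'I_n) :
  continuous (fun y : 'rV[R]_n => y 0 i).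
Proof. exact: coord_continuous. Qed.

Lemma contM (R : realType) n (f g : 'rV[R]_n -> R) :
  continuous f -> continuous g -> continuous (fun y => f y * g y).
Proof. move=> fc gc y; exact: (continuousM (fc y) (gc y)). Qed.

Lemma cont_quad (R : realType) n (w : 'I_n -> R) (P : 'M[R]_n) :
  continuous (fun y : 'rV[R]_n => ipw w (P *m y^T) (P *m y^T)).
Proof.
have E y : ipw w (P *m y^T) (P *m y^T) =
   \sum_i w i * (\sum_j P i j * y 0 j) * (\sum_j P i j * y 0 j).
  rewrite /ipw; apply: eq_bigr => i _; rewrite !mxE.
  by congr (_ * _ * _); apply: eq_bigr => j _; rewrite !mxE.
under eq_fun do rewrite E.
have Cs : forall i, continuous (fun y : 'rV[R]_n => \sum_j P i j * y 0 j).
  move=> i; apply: cont_sum => j; apply: contM; [exact: cst_continuous|exact: cont_coord].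
apply: cont_sum => i; apply: contM => //; apply: contM => //; exact: cst_continuous.
Qed.

Lemma cont_norm (R : realType) n (w : 'I_n -> R) :
  continuous (fun y : 'rV[R]_n => ipw w y^T y^T).
Proof.
have E y : ipw w y^T y^T = \sum_i w i * y 0 i * y 0 i.
  by rewrite /ipw; apply: eq_bigr => i _; rewrite !mxE.
under eq_fun do rewrite E.
apply: cont_sum => i; apply: contM; last exact: cont_coord.
apply: contM; [exact: cst_continuous|exact: cont_coord].
Qed.

Lemma ipw_normalize (R : realType) n (w : 'I_n -> R) z :
  0 < ipw w z z ->
  ipw w ((Num.sqrt (ipw w z z))^-1 *: z) ((Num.sqrt (ipw w z z))^-1 *: z) = 1.
Proof.
move=> s0; rewrite ipwZl ipwZr mulrA -expr2 exprVn sqr_sqrtr ?ltW //.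
by rewrite mulVf // gt_eqF.
Qed.

Lemma ipw_delta (R : realType) n (w : 'I_n -> R) (a : 'I_n) y :
  ipw w (\col_i (i == a)%:R) y = w a * y a 0.
Proof.
rewrite /ipw (bigD1 a) //= big1 => [|i /negPf ia]; rewrite !mxE ?eqxx ?ia.
  by rewrite addr0 mulr1.
by rewrite mulr0 mul0r.
Qed.

Lemma exists_min (R : realType) n (w : 'I_n -> R) (P : 'M[R]_n) (i0 : 'I_n) :
  (forall i, 1 <= w i) ->
  exists x0 : 'cV[R]_n, ipw w x0 x0 = 1 /\
    forall z, ipw w (P *m x0) (P *m x0) * ipw w z z <= ipw w (P *m z) (P *m z).
Proof.
move=> w1.
have w0 i : 0 < w i by apply: lt_le_trans (w1 i).
pose Nr := fun y : 'rV[R]_n => ipw w y^T y^T.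
pose Fr := fun y : 'rV[R]_n => ipw w (P *m y^T) (P *m y^T).
pose E := (Nr @^-1` [set x | x = 1])%classic.
have inE' z : 0 < ipw w z z ->
    E (((Num.sqrt (ipw w z z))^-1 *: z)^T).
  by move=> s0; rewrite /E /Nr /= trmxK ipw_normalize.
have E0 : (E !=set0)%classic.
  set z := (\col_i (i == i0)%:R : 'cV[R]_n).
  have zz : 0 < ipw w z z by rewrite ipw_delta mxE eqxx mulr1.
  by exists (((Num.sqrt (ipw w z z))^-1 *: z)^T); apply: inE'.
have Ecl : closed E.
  have := (continuous_closedP _).1 (@cont_norm _ _ w) _ (@closed_eq R 1); exact.
have Eco : compact E.
  have Bco : compact [set v : 'rV[R]_n | forall i, `[(-1 : R), 1]%classic (v ord0 i)]%classic.
    exact: (@rV_compact R n (fun=> `[(-1 : R), 1]%classic) (fun=> @segment_compact R _ _)).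
  apply: (subclosed_compact Ecl Bco).
  move=> y; rewrite /E /Nr /= => Ey i.
  have : w i * (y^T i 0 * y^T i 0) <= 1.
    rewrite -Ey /ipw (bigD1 i) //= mulrA lerDl.
    apply: sumr_ge0 => j _; rewrite -mulrA; apply: mulr_ge0; first exact: ltW.
    by rewrite -expr2 sqr_ge0.
  rewrite mxE => H.
  have yy : y 0 i * y 0 i <= 1.
    have := w1 i; have := mulr_ge0 (ltW (w0 i)) (ltW (w0 i)).
    have : 0 <= y 0 i * y 0 i by rewrite -expr2 sqr_ge0.
    move=> a b c; nra.
  by rewrite /= in_itv /=; apply/andP; split; nra.
have [c cE cmin] := EVT_min_rV E0 Eco (continuous_subspaceT (@cont_quad _ _ w P)).
exists c^T; move: cE; rewrite in_setE /E /Nr /= => cE; split => // z.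
have [z0|zpos] := eqVneq (ipw w z z) 0.
  by rewrite z0 mulr0; apply: ipw_ge0 => i; exact: ltW.
have s0 : 0 < ipw w z z by rewrite lt0r zpos ipw_ge0 // => i; exact: ltW.
have := cmin (((Num.sqrt (ipw w z z))^-1 *: z)^T).
rewrite in_setE => /(_ (inE' _ s0)).
rewrite /Fr /= trmxK -!scalemxAr ipwZl ipwZr mulrA -expr2 exprVn (sqr_sqrtr (ltW s0)).
by rewrite mulrC ler_pdivlMr.
Qed.

Lemma ipw0l (R : realType) n (w : 'I_n -> R) z : ipw w 0 z = 0.
Proof. by rewrite -(scale0r (0 : 'cV[R]_n)) ipwZl mul0r. Qed.

Lemma spec_bound (R : realType) n (w : 'I_n -> R) (P : 'M[R]_n) (c : R) :
  (forall i, 1 <= w i) ->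
  (forall x y, ipw w (P *m x) y = ipw w x (P *m y)) -> 0 <= c ->
  (forall (b : R) (f : 'cV[R]_n), f != 0 -> P *m f = b *: f -> c < `|b|) ->
  forall x : 'cV[R]_n, x != 0 -> c ^+ 2 * ipw w x x < ipw w (P *m x) (P *m x).
Proof.
move=> w1 Psa c0 Hev x x0.
have w0 i : 0 < w i by apply: lt_le_trans (w1 i).
have wge i : 0 <= w i by exact: ltW.
have sx : 0 < ipw w x x.
  rewrite lt0r ipw_ge0 // andbT; apply: contra x0 => /eqP H.
  by apply/eqP; exact: ipw_eq0 H.
have [i0 _] : exists i : 'I_n, x i 0 != 0.
  apply/existsP; apply: contraNT x0 => /existsPn H; apply/eqP/matrixP => i j.
  by rewrite ord1 mxE; move: (H i); rewrite negbK => /eqP.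
have [x1 [n1 Hmin]] := @exists_min _ _ w P i0 w1.
set m := ipw w (P *m x1) (P *m x1) in Hmin.
have m0 : 0 <= m by apply: ipw_ge0.
have var h : ipw w (P *m (P *m x1) - m *: x1) h = 0.
  set a := ipw w (P *m (P *m x1) - m *: x1) h.
  set b := ipw w (P *m h) (P *m h) - m * ipw w h h.
  have b0 : 0 <= b by rewrite subr_ge0; apply: Hmin.
  have key t : 0 <= 2 * t * a + t ^+ 2 * b.
    have := Hmin (x1 + t *: h); rewrite -subr_ge0.
    have -> : ipw w (P *m (x1 + t *: h)) (P *m (x1 + t *: h)) -
       m * ipw w (x1 + t *: h) (x1 + t *: h) = 2 * t * a + t ^+ 2 * b => //.
    rewrite /a /b mulmxDr -scalemxAr !ipwDl !ipwDr !ipwZl !ipwZr n1.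
    rewrite -(scaleNr m x1) ipwZl (Psa (P *m x1) h) [ipw w h x1]ipwC [ipw w (P *m h) (P *m x1)]ipwC.
    rewrite /m; ring.
  apply/eqP; apply: contraT => a0.
  have b1 : 0 < b + 1 by lra.
  have := key (- a / (b + 1)).
  have -> : 2 * (- a / (b + 1)) * a + (- a / (b + 1)) ^+ 2 * b
          = - (a ^+ 2 * (b + 2) / (b + 1) ^+ 2).
    by field; rewrite gt_eqF.
  rewrite oppr_ge0 => H.
  have : 0 < a ^+ 2 * (b + 2) / (b + 1) ^+ 2.
    apply: divr_gt0; last by rewrite exprn_gt0.
    by apply: mulr_gt0; [rewrite lt_neqAle eq_sym sqrf_eq0 a0 sqr_ge0|lra].
  by rewrite ltNge H.
have PPx : P *m (P *m x1) = m *: x1.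
  apply/eqP; rewrite -subr_eq0; apply/eqP; apply: (ipw_eq0 w0); exact: var.
have x10 : x1 != 0.
  by apply/eqP => x10; move: n1; rewrite x10 ipw0l => /eqP; rewrite eq_sym oner_eq0.
set t0 := Num.sqrt m.
have t0ge : 0 <= t0 by apply: sqrtr_ge0.
have t02 : t0 ^+ 2 = m by apply: sqr_sqrtr.
have hc : c < t0.
  have [h0|hn0] := eqVneq (P *m x1 + t0 *: x1) 0.
    have := Hev (- t0) x1 x10.
    rewrite normrN ger0_norm //; apply.
    by rewrite scaleNr; apply/eqP; rewrite -subr_eq0 opprK h0.
  have := Hev t0 _ hn0; rewrite ger0_norm //; apply.
  rewrite mulmxDr -scalemxAr PPx scalerDr scalerA -expr2 t02 addrC.
  by [].
have cm : c ^+ 2 < m by rewrite -t02; nra.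
apply: lt_le_trans (Hmin x).
by rewrite ltr_pM2r.
Qed.
End SpecM.
Import SpecM.

Lemma bigmin_le (I : eqType) (s : seq I) x0 (F : I -> nat) j :
  j \in s -> (\big[minn/x0]_(i <- s) F i <= F j)%N.
Proof.
elim: s => //= a s IH; rewrite in_cons big_cons => /orP [/eqP->|/IH H].
  exact: geq_minl.
by rewrite geq_min H orbT.
Qed.

Lemma mindeg_le n (e : rel 'I_n) v : (mindeg e <= deg e v)%N.
Proof. by rewrite /mindeg; apply: bigmin_le; exact: mem_index_enum. Qed.

Lemma mul_delta (R : realType) n (A : 'M[R]_n) (a w : 'I_n) :
  (A *m \col_i (i == a)%:R) w 0 = A w a.
Proof.
rewrite mxE (bigD1 a) //= big1 => [|i /negPf ia]; rewrite !mxE ?eqxx ?ia.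
  by rewrite addr0 mulr1.
by rewrite mulr0.
Qed.

Lemma ipwNl (R : realType) n (w : 'I_n -> R) x z : ipw w (- x) z = - ipw w x z.
Proof. by rewrite -scaleN1r ipwZl mulN1r. Qed.

Lemma arith d m k1 k2 : (3 <= d -> k1 + k2 + 2 <= m -> 2 * d <= m -> k1 + 2 <= 2 * d ->
  d * d * m + d * m < 2 * m + k1 * d * d + 2 * k1 * d + k2 * d * d -> False)%N.
Proof.
move=> d3 hm h2 hk key.
have h1 : ((k1 + k2 + 2) * d * d <= m * d * d)%N by rewrite !leq_mul2r hm !orbT.
have h4 : ((k1 + 2) * d <= 2 * d * d)%N by rewrite leq_mul2r hk orbT.
have h3 : (2 * d * d + 2 * m <= d * m + 4 * d)%N.
  have [s ds] : exists s, d = s + 2 by exists (d - 2)%N; lia.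
  rewrite ds in h2 *.
  have := leq_mul (leqnn s) h2; lia.
lia.
Qed.

Theorem mainTheorem20 (R : realType) (n : nat) (e : rel 'I_n) :
  simple_graph e ->
  connected_graph e ->
  (3 <= n)%N ->
  (3 <= mindeg e)%N ->
  (* epsilon = min_i |1 - lambda_i| > sqrt(d-1)/d *)
  (forall lam : R, nlap_eigenvalue R e lam ->
     Num.sqrt ((mindeg e)%:R - 1) / (mindeg e)%:R < `|1 - lam|) ->
  forall u v : 'I_n, u != v ->
  nbhd e u :&: nbhd e v != set0 ->
  (2 * mindeg e - 1 <=
     #|[set w in symdiff (nbhd e u) (nbhd e v) |
         (deg e w == mindeg e) || (deg e w == (mindeg e).+1)]|)%N.
Proof.
move=> [esym eirr] _ _ d3 Hlam u v uv Iuv.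
set d := mindeg e in d3 Hlam *.
pose dg := fun i => (deg e i)%:R : R.
have degd i : (d <= deg e i)%N by apply: mindeg_le.
have dg1 i : 1 <= dg i by rewrite /dg ler1n; have := degd i; lia.
have dg0 i : dg i != 0 by rewrite /dg pnatr_eq0 -lt0n; have := degd i; lia.
pose Pm : 'M[R]_n := \matrix_(i < n, j < n) ((e i j)%:R / dg i).
have nlapE : nlaplacian R e = 1%:M - Pm.
  by apply/matrixP => i j; rewrite !mxE.
have Pdg i (x : 'cV[R]_n) : dg i * (Pm *m x) i 0 = \sum_j (e i j)%:R * x j 0.
  rewrite mxE mulr_sumr; apply: eq_bigr => j _; rewrite mxE.
  by rewrite mulrA [dg i * _]mulrC divfK.
have Psa (x y : 'cV[R]_n) : ipw dg (Pm *m x) y = ipw dg x (Pm *m y).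
  rewrite /ipw.
  transitivity (\sum_i \sum_j (e i j)%:R * x j 0 * y i 0).
    by apply: eq_bigr => i _; rewrite Pdg mulr_suml.
  transitivity (\sum_i \sum_j x i 0 * ((e i j)%:R * y j 0)); last first.
    apply: eq_bigr => i _; rewrite mulrAC Pdg mulr_suml.
    by apply: eq_bigr => j _; ring.
  rewrite exchange_big /=; apply: eq_bigr => i _; apply: eq_bigr => j _.
  rewrite (esym j i); ring.
pose c : R := Num.sqrt (d%:R - 1) / d%:R.
have c0 : 0 <= c by apply: divr_ge0; [exact: sqrtr_ge0|exact: ler0n].
have Hev (b : R) (f : 'cV[R]_n) : f != 0 -> Pm *m f = b *: f -> c < `|b|.
  move=> f0 Pf.
  have -> : b = 1 - (1 - b) by ring.
  apply: Hlam; exists f => //.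
  by rewrite nlapE mulmxBl mul1mx Pf scalerBl scale1r.
pose eu := \col_i (i == u)%:R : 'cV[R]_n.
pose ev := \col_i (i == v)%:R : 'cV[R]_n.
pose x := eu - ev.
have x0 : x != 0.
  apply/eqP => h; have := congr1 (fun M : 'cV[R]_n => M u 0) h.
  rewrite !mxE eqxx (negPf uv) /= => /eqP; rewrite subr0 oner_eq0.
  by [].
have := spec_bound dg1 Psa c0 Hev x0.
have -> : ipw dg x x = dg u + dg v.
  rewrite /x ipwDl ipwNl !ipw_delta !mxE eqxx (negPf uv) eq_sym (negPf uv) /=.
  rewrite eqxx /=; lra.
have PxE w : (Pm *m x) w 0 = ((e w u)%:R - (e w v)%:R) / dg w.
  by rewrite /x mulmxBr [_ w 0]mxE [X in _ + X]mxE !mul_delta !mxE -mulrBl.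
set D := symdiff (nbhd e u) (nbhd e v).
have -> : ipw dg (Pm *m x) (Pm *m x) = \sum_(w in D) (dg w)^-1.
  rewrite /ipw [RHS]big_mkcond; apply: eq_bigr => w _.
  rewrite !PxE /D /symdiff /nbhd !inE (esym w u) (esym w v).
  have := dg0 w.
  by case: (e u w); case: (e v w) => /= h; field.
move=> hS.
set K := [set w in D | (deg e w == d) || (deg e w == d.+1)].
rewrite leqNgt; apply/negP => hK.
pose dR : R := d%:R.
have dR3 : 3 <= dR by rewrite /dR (ler_nat R 3 d).
have hsum : \sum_(w in D) (dg w)^-1 <=
    \sum_(w in D) (if w \in K then dR^-1 else (dR + 2)^-1).
  apply: ler_sum => w wD; case: ifP => wK.
    rewrite lef_pV2 ?posrE; first by rewrite /dg /dR ler_nat.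
      exact: (lt_le_trans ltr01 (dg1 w)).
    by lra.
  have h2 : (d.+2 <= deg e w)%N.
    move: wK; rewrite /K inE wD /= => /negbT; rewrite negb_or => /andP[h1 h1'].
    have := degd w; move: h1 h1' => /eqP h1 /eqP h1'; lia.
  rewrite lef_pV2 ?posrE; first by have := ler_nat R (d+2) (deg e w); rewrite natrD => ->; lia.
    exact: (lt_le_trans ltr01 (dg1 w)).
  by lra.
have hsplit : \sum_(w in D) (if w \in K then dR^-1 else (dR + 2)^-1) =
    dR^-1 *+ #|D :&: K| + (dR + 2)^-1 *+ #|D :\: K|.
  rewrite (big_setID K) /=; congr (_ + _); rewrite -sumr_const; apply: eq_bigr => w.
    by rewrite in_setI => /andP[_ ->].
  by rewrite in_setD => /andP[/negPf -> _].
have k1K : (#|D :&: K| <= #|K|)%N by apply: subset_leq_card; exact: subsetIr.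
have kD : (#|D :&: K| + #|D :\: K| = #|D|)%N by apply: cardsID.
have Dab : (#|D| + 2 <= deg e u + deg e v)%N.
  have I1 : (0 < #|nbhd e u :&: nbhd e v|)%N by rewrite card_gt0.
  have Iu : (#|nbhd e u :&: nbhd e v| <= deg e u)%N.
    by apply: subset_leq_card; exact: subsetIl.
  have Iv : (#|nbhd e u :&: nbhd e v| <= deg e v)%N.
    by apply: subset_leq_card; exact: subsetIr.
  have := cardsU (nbhd e u :\: nbhd e v) (nbhd e v :\: nbhd e u).
  rewrite -/(symdiff _ _) -/D !cardsD [nbhd e v :&: _]setIC.
  rewrite /deg in Iu Iv *; lia.
set k1 := #|D :&: K| in hsplit k1K kD.
set k2 := #|D :\: K| in hsplit kD.
have c2 : c ^+ 2 = (dR - 1) / dR ^+ 2.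
  by rewrite /c expr_div_n sqr_sqrtr // -/dR; lra.
rewrite c2 in hS.
rewrite hsplit in hsum; have hR := lt_le_trans hS hsum.
rewrite -[dR^-1 *+ k1]mulr_natr -[(dR + 2)^-1 *+ k2]mulr_natr in hR.
have pos : 0 < dR ^+ 2 * (dR + 2) by apply: mulr_gt0; [apply: exprn_gt0|]; lra.
have key : (d * d * (deg e u + deg e v) + d * (deg e u + deg e v) <
    2 * (deg e u + deg e v) + k1 * d * d + 2 * k1 * d + k2 * d * d)%N.
  rewrite -(ltr_nat R) !(natrD, natrM) -/dR.
  have dR0 : dR != 0 by rewrite gt_eqF //; lra.
  have dR20 : dR + 2 != 0 by rewrite gt_eqF //; lra.
  rewrite -subr_gt0 in hR; rewrite -subr_gt0.
  apply: (lt_le_trans (mulr_gt0 hR pos)); rewrite le_eqVlt; apply/orP; left; apply/eqP.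
  by rewrite /dg; field; apply/andP.

have hm : (k1 + k2 + 2 <= deg e u + deg e v)%N by rewrite kD.
have h2 : (2 * d <= deg e u + deg e v)%N.
  by rewrite mul2n -addnn leq_add.
have hk : (k1 + 2 <= 2 * d)%N.
  move: hK k1K d3; clear; lia.
exact: (@arith _ _ _ _ d3 hm h2 hk key).
Qed.
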